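(* Let $P$ be a quasi-lattice ordered subsemigroup of a group $Q$ and $\Lambda$ an $(r,d)$-proper topological $P$-graph. Let $\Omega$ be its path space and $T$ the shift: $\Omega*P=\{(A,n)\in\Omega\times P: A\cdot n\neq\emptyset\}$, $T(A,n)=A\cdot n$. Then $T$ is a directed action of $P$ on $\Omega$ by partial local homeomorphisms.
   Context: $P\subset Q$ subsemigroup, $m\le n$ iff $n=mp$ with $p\in P$; quasi-lattice ordered: $P\cap P^{-1}=\{e\}$ and two elements with a common upper bound have a least upper bound. Topological $P$-graph: small category $\Lambda$ with vertex set $\Lambda^{(0)}\subset\Lambda$, $r,s:\Lambda\to\Lambda^{(0)}$, composition on $\Lambda^{(2)}=\{(\lambda,\mu):s(\lambda)=r(\mu)\}$; $\Lambda,\Lambda^{(0)}$ locally compact Hausdorff, $r,s$ continuous, $s$ a local homeomorphism, inclusion of vertices continuous, composition continuous and open; continuous degree map $d:\Lambda\to P$ ($P$ discrete) with $d(\lambda\mu)=d(\lambda)d(\mu)$, $d(v)=e$ on vertices, and composition $\Lambda^m*\Lambda^n\to\Lambda^{mn}$ a homeomorphism ($\Lambda^m=d^{-1}(m)$). $(r,d)$-proper: $(r,d):\Lambda\to\Lambda^{(0)}\times P$ is proper. $\mu\le\lambda$ iff $\lambda=\mu\nu$. A subset is hereditary if closed under $\le$-predecessors and directed if any two elements have a common upper bound inside it. The path space $\Omega$ is the set of nonempty closed hereditary directed subsets of $\Lambda$ with the relative Fell topology (basic open sets $\{F:F\cap K=\emptyset, F\cap U_i\ne\emptyset\}$, $K$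 compact, $U_i$ open). $A\cdot n=\{\nu:\exists\mu\in\Lambda^n, \mu\nu\in A\}$. For a partial action, $U(n)=\{A:(A,n)\in\Omega*P\}$, $V(n)=\{A\cdot n\}$, $T_n(A)=A\cdot n$; ''by partial local homeomorphisms'' means each $U(n),V(n)$ is open and $T_n:U(n)\to V(n)$ is a local homeomorphism; directed means whenever $U(m)\cap U(n)\neq\emptyset$ there is $r\ge m,n$ in $P$ with $U(m)\cap U(n)=U(r)$. A partial action satisfies $A\cdot e=A$ and $(A,mn)\in\Omega*P$ iff $(A,m),(A\cdot m,n)\in\Omega*P$ with $(A\cdot m)\cdot n=A\cdot(mn)$. *)

(* Defs.v *)
From HB Require Import structures.
From mathcomp Require Import all_boot all_order all_algebra.
From mathcomp Require Import all_classical all_reals all_analysis.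

Set Implicit Arguments.
Unset Strict Implicit.
Unset Printing Implicit Defensive.

Local Open Scope classical_set_scope.
Local Open Scope group_scope.

(* Generic topological notions, phrased for an arbitrary "open sets"   *)
(* predicate, so that they apply both to mathcomp topological types    *)
(* (with [open]) and to the path space with its relative Fell topology *)

Definition rel_open {X : Type} (opX : set (set X)) (A W : set X) : Prop :=
  exists O, opX O /\ W = A `&` O.

Definition rel_cont {X Y : Type} (opX : set (set X)) (opY : set (set Y))
    (A : set X) (f : X -> Y) : Prop :=
  forall O, opY O -> rel_open opX A (A `&` f @^-1` O).

Definition homeo_on {X Y : Type} (opX : set (set X)) (opY : set (set Y))
    (A : set X) (B : set Y) (f : X -> Y) : Prop :=
  (forall x, A x -> B (f x)) /\
  exists g : Y -> X,
    (forall y, B y -> A (g y) /\ f (g y) = y) /\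
    (forall x, A x -> g (f x) = x) /\
    rel_cont opX opY A f /\ rel_cont opY opX B g.

Definition local_homeo {X Y : Type} (opX : set (set X)) (opY : set (set Y))
    (A : set X) (B : set Y) (f : X -> Y) : Prop :=
  (forall x, A x -> B (f x)) /\
  forall x, A x -> exists W : set X,
    W x /\ W `<=` A /\ rel_open opX A W /\ rel_open opY B (f @` W) /\
    homeo_on opX opY W (f @` W) f.

Definition ple {Q : groupType} (P : set Q) (m n : Q) : Prop :=
  exists p, P p /\ n = m * p.

Definition quasi_lattice_ordered {Q : groupType} (P : set Q) : Prop :=
  (forall m n, P m -> P n -> P (m * n)) /\
  [set x | P x /\ P x^-1] = [set 1] /\
  (forall m n, P m -> P n ->
     (exists k, P k /\ ple P m k /\ ple P n k) ->
     exists l, P l /\ ple P m l /\ ple P n l /\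
       forall k, P k -> ple P m k -> ple P n k -> ple P l k).

(* The vertex set Lambda^(0) is the space V, included in Lambda by the  *)
(* injection iota (vertices are the identity morphisms); comp l m is    *)
(* the composite l m, meaningful when s l = r m.                        *)

Section PGraph.
Context {Q : groupType} (P : set Q) {L V : topologicalType}
  (iota : V -> L) (r s : L -> V) (comp : L -> L -> L) (d : L -> Q).

Definition composable : set (L * L) := [set p | s p.1 = r p.2].

Definition uncomp (p : L * L) : L := comp p.1 p.2.

Definition composable_deg (m n : Q) : set (L * L) :=
  [set p | s p.1 = r p.2 /\ d p.1 = m /\ d p.2 = n].

Definition deg_set (n : Q) : set L := d @^-1` [set n].

Definition is_topological_P_graph : Prop :=
  (forall v, r (iota v) = v) /\ (forall v, s (iota v) = v) /\
  (forall l m, s l = r m -> r (comp l m) = r l /\ s (comp l m) = s m) /\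
  (forall l m n, s l = r m -> s m = r n ->
     comp (comp l m) n = comp l (comp m n)) /\
  (forall l, comp (iota (r l)) l = l) /\
  (forall l, comp l (iota (s l)) = l) /\
  hausdorff_space L /\ locally_compact [set: L] /\
  hausdorff_space V /\ locally_compact [set: V] /\
  continuous r /\ continuous s /\
  local_homeo open open [set: L] [set: V] s /\
  continuous iota /\
  rel_cont open open composable uncomp /\
  (forall W, rel_open open composable W -> open (uncomp @` W)) /\
  (forall l, P (d l)) /\
  continuous (d : L -> discrete_topology Q) /\
  (forall l m, s l = r m -> d (comp l m) = d l * d m) /\
  (forall v, d (iota v) = 1) /\
  (forall m n, P m -> P n ->
     homeo_on open open (composable_deg m n) (deg_set (m * n)) uncomp).

Definition rd_proper : Prop :=
  forall K : set (V * discrete_topology Q),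
    K `<=` [set x | P x.2] -> compact K ->
    compact ((fun l => (r l, d l : discrete_topology Q)) @^-1` K).

Definition path_le (mu la : L) : Prop :=
  exists nu, s mu = r nu /\ la = comp mu nu.

Definition hereditary (A : set L) : Prop :=
  forall la mu, A la -> path_le mu la -> A mu.

Definition directed_set (A : set L) : Prop :=
  forall la mu, A la -> A mu -> exists nu, A nu /\ path_le la nu /\ path_le mu nu.

Definition path_space : set (set L) :=
  [set A | A !=set0 /\ closed A /\ hereditary A /\ directed_set A].

Definition fell_basic (K : set L) (k : nat) (U : 'I_k -> set L) : set (set L) :=
  [set F | F `&` K = set0 /\ forall i, F `&` U i !=set0].

Definition omega_open (W : set (set L)) : Prop :=
  W `<=` path_space /\
  forall A, W A -> exists (K : set L) (k : nat) (U : 'I_k -> set L),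
    compact K /\ (forall i, open (U i)) /\ fell_basic K U A /\
    fell_basic K U `&` path_space `<=` W.

Definition shift (A : set L) (n : Q) : set L :=
  [set nu | exists mu, d mu = n /\ s mu = r nu /\ A (comp mu nu)].

Definition omega_star_P : set (set L * Q) :=
  [set x | path_space x.1 /\ P x.2 /\ shift x.1 x.2 !=set0].

Definition dom_U (n : Q) : set (set L) := [set A | omega_star_P (A, n)].
Definition ran_V (n : Q) : set (set L) := (fun A => shift A n) @` dom_U n.

Definition is_partial_action : Prop :=
  (forall x, omega_star_P x -> path_space (shift x.1 x.2)) /\
  (forall A, path_space A -> omega_star_P (A, 1) /\ shift A 1 = A) /\
  (forall A m n, path_space A -> P m -> P n ->
     (omega_star_P (A, m * n) <->
       (omega_star_P (A, m) /\ omega_star_P (shift A m, n)))) /\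
  (forall A m n, path_space A -> P m -> P n -> omega_star_P (A, m * n) ->
     shift (shift A m) n = shift A (m * n)).

Definition by_partial_local_homeos : Prop :=
  forall n, P n ->
    omega_open (dom_U n) /\ omega_open (ran_V n) /\
    local_homeo omega_open omega_open (dom_U n) (ran_V n) (fun A => shift A n).

Definition directed_action : Prop :=
  forall m n, P m -> P n -> dom_U m `&` dom_U n !=set0 ->
    exists k, P k /\ ple P m k /\ ple P n k /\ dom_U m `&` dom_U n = dom_U k.

End PGraph.

(* Main.v *)
Require Import Defs.
From HB Require Import structures.
From mathcomp Require Import all_boot all_order all_algebra.
From mathcomp Require Import all_classical all_reals all_analysis.
From mathcomp Require Import finmap.

Set Implicit Arguments.
Unset Strict Implicit.
Unset Printing Implicit Defensive.
Local Open Scope classical_set_scope.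
Local Open Scope group_scope.

Definition ptd {T : topologicalType} (x : T) : Type := T.
HB.instance Definition _ (T : topologicalType) (x : T) := Topological.copy (ptd x) T.
HB.instance Definition _ (T : topologicalType) (x : T) := isPointed.Build (ptd x) x.

Lemma cpt_cover (T : topologicalType) (K : set T) : compact K -> cover_compact K.
Proof.
move=> cK I D f fo cov.
case: (pselect (K !=set0)) => [[x Kx]|K0]; last first.
  exists fset0%fset => // y Ky; exfalso; apply: K0; by exists y.
have : @compact (ptd x) K by [].
rewrite compact_cover => /(_ I D f fo cov).
by [].
Qed.

Lemma open_setX (X Y : topologicalType) (A : set X) (B : set Y) :
  open A -> open B -> open (A `*` B).
Proof.
move=> oA oB; rewrite openE => -[x y] [Ax By]; rewrite /interior.
by exists (A, B) => //; split; apply: open_nbhs_nbhs; split.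
Qed.

Lemma rel_cont_cont (X Y : topologicalType) (A : set X) (f : X -> Y) :
  continuous f -> rel_cont open open A f.
Proof.
move=> cf O oO; exists (f @^-1` O); split => //; exact: (continuousP _).1 cf O oO.
Qed.

Lemma rel_cont_fst (X Y : topologicalType) (A : set (X * Y)) : rel_cont open open A fst.
Proof.
move=> O oO; exists (O `*` setT); split; first by apply: open_setX => //; exact: openT.
by apply/seteqP; split => -[x y] /= [h1 h2]; split => //; case: h2.
Qed.

Lemma rel_cont_snd (X Y : topologicalType) (A : set (X * Y)) : rel_cont open open A snd.
Proof.
move=> O oO; exists (setT `*` O); split; first by apply: open_setX => //; exact: openT.
by apply/seteqP; split => -[x y] /= [h1 h2]; split => //; case: h2.
Qed.

Lemma rel_cont_sub (X Y : Type) (opX : set (set X)) (opY : set (set Y)) (A B : set X)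
  (f : X -> Y) : rel_cont opX opY A f -> B `<=` A -> rel_cont opX opY B f.
Proof.
move=> fc BA O oO; have [W [oW E]] := fc O oO; exists W; split => //.
apply/seteqP; split => x [Bx h]; split => //.
  have : (A `&` f @^-1` O) x by split; [exact: BA | exact: h].
  by rewrite E => -[].
have : (A `&` W) x by split; [exact: BA | exact: h].
by rewrite -E => -[].
Qed.

Lemma rel_cont_compact (X Y : topologicalType) (A : set X) (f : X -> Y) K :
  rel_cont open open A f -> K `<=` A -> compact K -> compact (f @` K).
Proof.
move=> fc KA cK.
case: (pselect (K !=set0)) => [[x Kx]|K0]; last first.
  have -> : K = set0 by apply/seteqP; split => // y Ky; exfalso; apply: K0; exists y.
  rewrite image_set0; exact: compact0.
suff : @compact (ptd (f x)) (f @` K) by [].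
rewrite compact_cover => I D F Fo cov.
pose G i := \bigcup_(W in [set W | open W /\ A `&` f @^-1` F i = A `&` W]) W.
have Go : forall i, D i -> open (G i).
  by move=> i _; apply: bigcup_open => W [].
have covK : K `<=` cover D G.
  move=> y Ky; have [i Di Fiy] := cov _ (ex_intro2 _ _ y Ky erefl).
  have [W [oW E]] := fc (F i) (Fo i Di).
  exists i => //; exists W; first by split.
  have : (A `&` f @^-1` F i) y by split; [exact: KA | exact: Fiy].
  by rewrite E => -[].
have [D' sD covD'] := cpt_cover cK Go covK.
exists D' => // _ [y Ky <-].
have [i D'i [W [oW E] Wy]] := covD' _ Ky.
exists i => //; have : (A `&` W) y by split; [exact: KA | exact: Wy].
by rewrite -E => -[].
Qed.

Lemma rel_cont_closed (X Y : topologicalType) (A : set X) (f : X -> Y) Z :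
  rel_cont open open A f -> closed A -> closed Z -> closed (A `&` f @^-1` Z).
Proof.
move=> fc cA cZ; have [W [oW E]] := fc _ (closed_openC cZ).
have -> : A `&` f @^-1` Z = A `&` ~` W.
  apply/seteqP; split => x [Ax h]; split => //.
    move=> Wx; have : (A `&` W) x by [].
    by rewrite -E => -[_ ]; apply.
  case: (pselect (Z (f x))) => // nZ.
  by have : (A `&` f @^-1` ~` Z) x by []; rewrite E => -[].
by apply: closedI => //; exact: open_closedC.
Qed.

Lemma openP' (X : topologicalType) (A : set X) :
  (forall x, A x -> exists W, open W /\ W x /\ W `<=` A) -> open A.
Proof.
move=> h; rewrite openE => x /h [W [oW [Wx sWA]]]; rewrite /interior.
by apply: filterS sWA _; apply: open_nbhs_nbhs.
Qed.

Fixpoint allS {T : Type} (Pr : T -> Prop) (l : seq T) : Prop :=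
  match l with [::] => True | U :: l' => Pr U /\ allS Pr l' end.

Lemma allS_cat {T : Type} (Pr : T -> Prop) l1 l2 :
  allS Pr (l1 ++ l2) <-> allS Pr l1 /\ allS Pr l2.
Proof. by elim: l1 => [|a l1 IH] /=; [tauto| rewrite IH; tauto]. Qed.

Lemma allS_nthP {T : Type} (x0 : T) (Pr : T -> Prop) l :
  allS Pr l <-> forall i, (i < size l)%N -> Pr (nth x0 l i).
Proof.
elim: l => [|a l IH] /=; first by split => // _ i.
split.
  by move=> [Pa /IH h] [|i] //= hi; apply: h.
move=> h; split; first exact: (h 0%N).
by apply/IH => i hi; apply: (h i.+1).
Qed.

Lemma allS_mem {T : eqType} (Pr : T -> Prop) (l : seq T) :
  allS Pr l <-> forall x, x \in l -> Pr x.
Proof.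
elim: l => [|a l IH] /=; first by split.
split.
  by move=> [Pa /IH h] x; rewrite in_cons => /orP [/eqP ->|/h].
move=> h; split; first by apply: h; rewrite in_cons eqxx.
by apply/IH => x hx; apply: h; rewrite in_cons hx orbT.
Qed.

Lemma allS_map {T U : Type} (Pr : U -> Prop) (f : T -> U) l :
  allS Pr (map f l) <-> allS (fun x => Pr (f x)) l.
Proof. by elim: l => [|a l IH] //=; rewrite IH. Qed.

Section Main.
Context {Q : groupType} (P : set Q) {L V : topologicalType}
  (iota : V -> L) (r s : L -> V) (comp : L -> L -> L) (d : L -> Q).
Hypothesis HQ : quasi_lattice_ordered P.
Hypothesis HG : is_topological_P_graph P iota r s comp d.
Hypothesis Hrd : rd_proper P r d.

Local Notation cmpb := (Defs.composable r s).
Local Notation Lam := (Defs.deg_set d).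
Local Notation ple' := (Defs.path_le r s comp).
Local Notation Om := (Defs.path_space r s comp).
Local Notation Oop := (omega_open r s comp).
Local Notation sh := (Defs.shift r s comp d).
Local Notation OSP := (omega_star_P P r s comp d).
Local Notation UU := (dom_U P r s comp d).
Local Notation VV := (ran_V P r s comp d).
Local Notation cdeg := (composable_deg r s d).
Local Notation hered := (Defs.hereditary r s comp).
Local Notation dirs := (Defs.directed_set r s comp).

Ltac unG := case: HG => r_iota' [s_iota' [rs_comp' [assoc' [iota_l' [iota_r' [hausL [lcL [hausV [lcV [cont_r [cont_s [lh_s [cont_iota [rc_comp [open_comp' [Pd [cont_d [d_comp [d_iota homeoG]]]]]]]]]]]]]]]]]]].

Lemma r_iota v : r (iota v) = v. Proof. by unG. Qed.
Lemma s_iota v : s (iota v) = v. Proof. by unG. Qed.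
Lemma r_comp l m : s l = r m -> r (comp l m) = r l. Proof. by unG => /rs_comp' []. Qed.
Lemma s_comp l m : s l = r m -> s (comp l m) = s m. Proof. by unG => /rs_comp' []. Qed.
Lemma assoc l m n : s l = r m -> s m = r n -> comp (comp l m) n = comp l (comp m n).
Proof. by unG; apply: assoc'. Qed.
Lemma iota_l l : comp (iota (r l)) l = l. Proof. by unG. Qed.
Lemma iota_r l : comp l (iota (s l)) = l. Proof. by unG. Qed.
Lemma hausL : hausdorff_space L. Proof. by unG. Qed.
Lemma lcL : locally_compact [set: L]. Proof. by unG. Qed.
Lemma hausV : hausdorff_space V. Proof. by unG. Qed.
Lemma cont_r : continuous r. Proof. by unG. Qed.
Lemma cont_s : continuous s. Proof. by unG. Qed.
Lemma lh_s : local_homeo open open [set: L] [set: V] s. Proof. by unG. Qed.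
Lemma rc_comp : rel_cont open open cmpb (uncomp comp). Proof. by unG. Qed.
Lemma open_comp W : rel_open open cmpb W -> open (uncomp comp @` W). Proof. by unG; move=> h; apply: open_comp'. Qed.
Lemma Pd l : P (d l). Proof. by unG. Qed.
Lemma cont_d : continuous (d : L -> discrete_topology Q). Proof. by unG. Qed.
Lemma d_comp l m : s l = r m -> d (comp l m) = d l * d m. Proof. by unG; apply: d_comp. Qed.
Lemma d_iota v : d (iota v) = 1. Proof. by unG. Qed.
Lemma homeoG m n : P m -> P n ->
     homeo_on open open (cdeg m n) (Lam (m * n)) (uncomp comp).
Proof. by move=> Pm Pn; unG; apply: homeoG. Qed.

Lemma P_mul m n : P m -> P n -> P (m * n). Proof. by case: HQ => h _; apply: h. Qed.
Lemma P1 : P 1.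
Proof.
case: HQ => _ [E _]; have : [set x | P x /\ P x^-1] 1 by rewrite E.
by case.
Qed.
Lemma P_antisym x : P x -> P x^-1 -> x = 1.
Proof. by case: HQ => _ [E _] h1 h2; have : [set x | P x /\ P x^-1] x by []; rewrite E. Qed.
Lemma P_lub m n : P m -> P n ->
     (exists k, P k /\ ple P m k /\ ple P n k) ->
     exists l, P l /\ ple P m l /\ ple P n l /\
       forall k, P k -> ple P m k -> ple P n k -> ple P l k.
Proof. by case: HQ => _ [_ h]; apply: h. Qed.


Lemma fact_inj a b a' b' : s a = r b -> s a' = r b' -> d a = d a' -> d b = d b' ->
  comp a b = comp a' b' -> a = a' /\ b = b'.
Proof.
move=> h1 h2 e1 e2 e.
have [_ [g [_ [gK _]]]] := homeoG (Pd a) (Pd b).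
have H1 : cdeg (d a) (d b) (a,b) by [].
have H2 : cdeg (d a) (d b) (a',b') by rewrite /composable_deg /= -e1 -e2.
move: (gK _ H1) (gK _ H2); rewrite /uncomp /= e => ->; by case.
Qed.

Lemma fact_ex la m n : P m -> P n -> d la = m * n ->
  exists a b, s a = r b /\ d a = m /\ d b = n /\ la = comp a b.
Proof.
move=> Pm Pn E; have [_ [g [gA _]]] := homeoG Pm Pn.
have [[H1 [H2 H3]] H4] := gA la E.
by exists (g la).1, (g la).2; split => //; split => //; split.
Qed.

Lemma le_refl la : ple' la la.
Proof. by exists (iota (s la)); rewrite r_iota iota_r. Qed.

Lemma vert_le la : ple' (iota (r la)) la.
Proof. by exists la; rewrite s_iota iota_l. Qed.

Lemma le_trans a b c : ple' a b -> ple' b c -> ple' a c.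
Proof.
move=> [x [hx ->]] [y [hy ->]].
have hxy : s x = r y by rewrite -hy s_comp.
exists (comp x y); split; first by rewrite r_comp.
by rewrite assoc.
Qed.

Lemma le_deg a b : ple' a b -> ple P (d a) (d b).
Proof. by move=> [x [hx ->]]; exists (d x); split; [exact: Pd | rewrite d_comp]. Qed.

Lemma prefix_uniq a a' b : ple' a b -> ple' a' b -> d a = d a' -> a = a'.
Proof.
move=> [x [hx Ex]] [x' [hx' Ex']] e.
have : d a * d x = d a' * d x' by rewrite -!d_comp // -Ex -Ex'.
rewrite e => /mulgI e2.
by have [] := fact_inj hx hx' e e2 (etrans (esym Ex) Ex').
Qed.

Lemma prefix_ex b m : P m -> ple P m (d b) -> exists a, ple' a b /\ d a = m.
Proof.
move=> Pm [p [Pp E]]; have [a [c [h1 [h2 [h3 E2]]]]] := fact_ex Pm Pp E.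
by exists a; split => //; exists c.
Qed.

Lemma prefix_le a a' b : ple' a b -> ple' a' b -> ple P (d a) (d a') -> ple' a a'.
Proof.
move=> hab [x' [hx' Eb]] [p [Pp E]].
have [c [e [h1 [h2 [h3 E2]]]]] := fact_ex (Pd a) Pp E.
have hex : s e = r x' by rewrite -(s_comp h1) -E2.
have hcb : ple' c b.
  exists (comp e x'); split; first by rewrite r_comp.
  by rewrite Eb E2 assoc.
have Eac := prefix_uniq hab hcb (esym h2); subst c.
by exists e; split.
Qed.

Lemma deg1_vertex mu : d mu = 1 -> mu = iota (r mu).
Proof.
move=> h.
have [] := @fact_inj (iota (r mu)) mu mu (iota (s mu)).
- by rewrite s_iota.
- by rewrite r_iota.
- by rewrite d_iota h.
- by rewrite d_iota h.
- by rewrite iota_l iota_r.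
by move=> ->.
Qed.

Lemma uniq_deg A x y : hered A -> dirs A -> A x -> A y -> d x = d y -> x = y.
Proof.
move=> hA dA Ax Ay e; have [nu [_ [h1 h2]]] := dA _ _ Ax Ay.
exact: prefix_uniq h1 h2 e.
Qed.

Lemma vertex_eq A x y : hered A -> dirs A -> A x -> A y -> r x = r y.
Proof.
move=> hA dA Ax Ay.
have Ax' : A (iota (r x)) by apply: hA Ax (vert_le x).
have Ay' : A (iota (r y)) by apply: hA Ay (vert_le y).
have := uniq_deg hA dA Ax' Ay'; rewrite !d_iota => /(_ erefl) E.
by rewrite -(r_iota (r x)) E r_iota.
Qed.

Lemma shift_iff A n : hered A -> (sh A n !=set0 <-> exists mu, A mu /\ d mu = n).
Proof.
move=> hA; split.
  move=> [nu [mu [h1 [h2 h3]]]]; exists mu; split => //.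
  by apply: hA h3 _; exists nu.
move=> [mu [Amu dmu]]; exists (iota (s mu)); exists mu.
by rewrite r_iota iota_r.
Qed.

Lemma shift_char A n mu : hered A -> dirs A -> A mu -> d mu = n ->
  forall nu, sh A n nu <-> (s mu = r nu /\ A (comp mu nu)).
Proof.
move=> hA dA Amu dmu nu; split.
  move=> [mu' [h1 [h2 h3]]].
  have Amu' : A mu' by apply: hA h3 _; exists nu.
  have E := uniq_deg hA dA Amu Amu' (etrans dmu (esym h1)).
  by rewrite E.
by move=> [h1 h2]; exists mu.
Qed.


Lemma cancel_left mu x y : s mu = r x -> s mu = r y -> comp mu x = comp mu y -> x = y.
Proof.
move=> hx hy e.
have dd : d x = d y by apply: (@mulgI _ (d mu)); rewrite -!d_comp // e.
by have [] := fact_inj hx hy erefl dd e.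
Qed.

Lemma mu_le mu x : s mu = r x -> ple' mu (comp mu x).
Proof. by move=> h; exists x. Qed.

Lemma le_comp_mono mu x y : ple' x y -> s mu = r x -> ple' (comp mu x) (comp mu y).
Proof.
move=> [z [hz ->]] h; exists z; split; first by rewrite s_comp.
by rewrite assoc.
Qed.

Lemma le_comp_cancel mu x y : ple' (comp mu x) (comp mu y) -> s mu = r x -> s mu = r y ->
  ple' x y.
Proof.
move=> [z [hz E]] hx hy; rewrite s_comp // in hz.
rewrite assoc // in E; have E2 := cancel_left hy _ E.
by exists z; rewrite E2 //; rewrite r_comp.
Qed.

Lemma Lam_open q : open (Lam q).
Proof.
have := (continuousP _).1 cont_d [set q : discrete_topology Q] (discrete_open _).
by [].
Qed.

Lemma Lam_closed q : closed (Lam q).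
Proof.
rewrite -openC; apply: openP' => x nx; exists (Lam (d x)); split; first exact: Lam_open.
by split => // y; rewrite /deg_set /= => ->.
Qed.

Lemma closed_unique (A : set L) :
  (forall x y, A x -> A y -> d x = d y -> x = y) -> closed A.
Proof.
move=> uA; rewrite -openC; apply: openP' => x nAx.
case: (pselect (exists a, A a /\ d a = d x)) => [[a [Aa da]] | no]; last first.
  exists (Lam (d x)); split; first exact: Lam_open.
  split => // y; rewrite /deg_set /= => dy Ay; apply: no; by exists y.
have xa : x != a by apply/eqP => E; apply: nAx; rewrite E.
have := hausL; rewrite open_hausdorff => /(_ x a xa) [] [W1 W2] /=.
rewrite !in_setE => -[xW1 aW2] [oW1 oW2 /eqP disj].
exists (W1 `&` Lam (d x)); split; first by apply: openI => //; exact: Lam_open.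
split => // y [yW1 dy] Ay.
have E : y = a by apply: uA => //; rewrite dy da.
have : (W1 `&` W2) a by split => //; rewrite -E.
by move/eqP: disj => ->.
Qed.

Lemma Om_closed (A : set L) : hered A -> dirs A -> closed A.
Proof. by move=> hA dA; apply: closed_unique => x y; apply: uniq_deg. Qed.

Lemma shift_Om A n : Om A -> sh A n !=set0 -> Om (sh A n).
Proof.
move=> [A0 [_ [hA dA]]] ne.
have [mu [Amu dmu]] := (shift_iff n hA).1 ne.
have ch := shift_char hA dA Amu dmu.
have hS : hered (sh A n).
  move=> la mu' /ch [h1 h2] [x [hx E]].
  apply/ch; have h3 : s mu = r mu' by rewrite h1 E r_comp.
  split => //; apply: hA h2 _; rewrite E; exists x; split; first by rewrite s_comp.
  by rewrite assoc.
have dS : dirs (sh A n).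
  move=> la la' /ch [h1 h2] /ch [h1' h2'].
  have [nu [Anu [l1 l2]]] := dA _ _ h2 h2'.
  have [c [hc Ec]] : ple' mu nu := le_trans (mu_le h1) l1.
  have Ac : sh A n c by apply/ch; split => //; rewrite -Ec.
  exists c; split => //; split.
    by apply: (@le_comp_cancel mu la c) => //; rewrite -Ec.
  by apply: (@le_comp_cancel mu la' c) => //; rewrite -Ec.
split => //; split; last by [].
by apply: Om_closed.
Qed.

Lemma shift1 A : Om A -> sh A 1 = A.
Proof.
move=> [A0 [_ [hA dA]]]; apply/seteqP; split => x.
  move=> [mu [h1 [h2 h3]]]; rewrite (deg1_vertex h1) in h2 h3.
  by rewrite s_iota in h2; rewrite h2 iota_l in h3.
move=> Ax; exists (iota (r x)); rewrite d_iota s_iota iota_l; done.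
Qed.

Lemma shift_comp A m n : P m -> P n -> sh (sh A m) n = sh A (m * n).
Proof.
move=> Pm Pn; apply/seteqP; split => x.
  move=> [a [da [hax [b [db [hb Ab]]]]]].
  rewrite r_comp // in hb.
  exists (comp b a); rewrite d_comp // db da s_comp //; split => //; split => //.
  by rewrite assoc.
move=> [c [dc [hc Ac]]].
have [b [a [hba [db [da Ec]]]]] := fact_ex Pm Pn dc.
rewrite Ec s_comp // in hc.
exists a; split => //; split => //; exists b; split => //; split; first by rewrite r_comp.
by rewrite -assoc // -Ec.
Qed.

Lemma OSP_mul A m n : Om A -> P m -> P n ->
  (OSP (A, m * n) <-> OSP (A, m) /\ OSP (sh A m, n)).
Proof.
move=> OA Pm Pn; have hA : hered A by case: OA => _ [_ []].
rewrite /omega_star_P /=; split.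
  move=> [_ [_ ne]].
  have [la [Ala dla]] := (shift_iff _ hA).1 ne.
  have [b [a [hba [db [da E]]]]] := fact_ex Pm Pn dla.
  have ne1 : sh A m !=set0.
    by apply/(shift_iff _ hA); exists b; split => //; apply: hA Ala _; rewrite E; exists a.
  split; first by split.
  split; first exact: shift_Om.
  by split => //; rewrite shift_comp.
move=> [[_ [_ ne1]] [_ [_ ne2]]]; split => //; split; first exact: P_mul.
by rewrite -shift_comp.
Qed.

Lemma partial_action : is_partial_action P r s comp d.
Proof.
split; first by move=> [A n] [OA [Pn ne]]; apply: shift_Om.
split.
  move=> A OA; split; last exact: shift1.
  split => //; split; first exact: P1.
  by rewrite /= shift1 //; case: OA.
split; first by move=> A m n OA Pm Pn; apply: OSP_mul.
by move=> A m n _ Pm Pn _; rewrite shift_comp.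
Qed.

Lemma directed_act : directed_action P r s comp d.
Proof.
move=> m n Pm Pn [A [[OA [_ neA]] [_ [_ neA']]]].
have [_ [_ [hA dA]]] := OA.
have [mu [Amu dmu]] := (shift_iff _ hA).1 neA.
have [mu' [Amu' dmu']] := (shift_iff _ hA).1 neA'.
have [nu [Anu [l1 l2]]] := dA _ _ Amu Amu'.
have := le_deg l1; have := le_deg l2; rewrite dmu dmu' => k2 k1.
have [l [Pl [ml [nl lub]]]] := P_lub Pm Pn (ex_intro _ (d nu) (conj (Pd nu) (conj k1 k2))).
exists l; split => //; split => //; split => //.
apply/seteqP; split => B.
  move=> [[OB [_ neB]] [_ [_ neB']]].
  have [_ [_ [hB dB]]] := OB.
  have [a [Ba da]] := (shift_iff _ hB).1 neB.
  have [a' [Ba' da']] := (shift_iff _ hB).1 neB'.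
  have [c [Bc [j1 j2]]] := dB _ _ Ba Ba'.
  have := le_deg j1; have := le_deg j2; rewrite da da' => i2 i1.
  have [e [le de]] := prefix_ex Pl (lub _ (Pd c) i1 i2).
  split => //; split => //; apply/(shift_iff _ hB); exists e; split => //.
  exact: hB Bc le.
move=> [OB [_ neB]]; have [_ [_ [hB dB]]] := OB.
have [a [Ba da]] := (shift_iff _ hB).1 neB.
have [e1 [le1 de1]] := prefix_ex Pm (eq_ind_r (fun x => ple P m x) ml da).
have [e2 [le2 de2]] := prefix_ex Pn (eq_ind_r (fun x => ple P n x) nl da).
split; split => //; split => //; apply/(shift_iff _ hB).
  by exists e1; split => //; exact: hB Ba le1.
by exists e2; split => //; exact: hB Ba le2.
Qed.


Lemma cpt_nbhd (x : L) : exists C : set L, compact C /\ nbhs x C.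
Proof.
have [U hU [cU _]] := lcL (I : [set: L] x).
exists U; split => //; move: hU; rewrite /within /= => hU.
by apply: (@filterS _ _ _ (fun y => setT y -> U y)) => // y; apply.
Qed.

Lemma cpt_nbhd_in (x : L) (W : set L) : open W -> W x ->
  exists C, compact C /\ C `<=` W /\ nbhs x C.
Proof.
move=> oW Wx; have [B [cB nB]] := cpt_nbhd x.
have reg := @compact_regular _ x B hausL cB nB.
have [E nE sE] := reg W (open_nbhs_nbhs (conj oW Wx)).
have clB : closed B by exact: compact_closed hausL cB.
exists (closure (E `&` B)); split.
  apply: (@subclosed_compact _ _ B (@closed_closure _ (E `&` B)) cB).
  by move=> y /(closureS (@subIsetr _ E B)); apply: clB.
split; first by move=> y /(closureS (@subIsetl _ E B)); apply: sE.
by apply: filterS (@subset_closure _ _) _; apply: filterI.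
Qed.

Lemma cmpb_closed : closed cmpb.
Proof.
rewrite -openC; apply: openP' => -[x y] /= nxy.
have nxy' : s x != r y by apply/eqP.
have := hausV; rewrite open_hausdorff => /(_ _ _ nxy') [] [W1 W2] /=.
rewrite !in_setE => -[xW1 yW2] [oW1 oW2 disj].
exists ((s @^-1` W1) `*` (r @^-1` W2)); split.
  by apply: open_setX; apply: (continuousP _).1; [exact: cont_s| |exact: cont_r|].
split => // -[a b] /= [h1 h2] E.
have : (W1 `&` W2) (s a) by split => //; rewrite E.
move: disj => disj H; have : (W1 `&` W2) (s a) by [].
by rewrite disj.
Qed.


Definition fl (K : set L) (Us : seq (set L)) : set (set L) :=
  [set F | F `&` K = set0 /\ allS (fun U => F `&` U !=set0) Us].

Lemma fl_basic K Us : fl K Us = fell_basic K (fun i : 'I_(size Us) => nth set0 Us i).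
Proof.
apply/seteqP; split => F [h1 h2]; split => //.
  by move=> i; move/(allS_nthP set0): h2; apply.
by apply/(allS_nthP set0) => i hi; apply: (h2 (Ordinal hi)).
Qed.

Lemma fell_fl K k (U : 'I_k -> set L) F :
  fell_basic K U F <-> fl K (map U (enum 'I_k)) F.
Proof.
rewrite /fell_basic /fl /=; split => -[h1 h2]; split => //.
  by rewrite allS_map; apply/allS_mem => i _; apply: h2.
by move: h2; rewrite allS_map => /allS_mem h2 i; apply: h2; rewrite mem_enum.
Qed.

Lemma omega_openE W A : Oop W -> W A -> exists K Us, compact K /\ allS open Us /\
  fl K Us A /\ (forall F, fl K Us F -> Om F -> W F).
Proof.
move=> [WO h] /h [K [k [U [cK [oU [bA sub]]]]]].
exists K, (map U (enum 'I_k)); split => //; split.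
  by rewrite allS_map; apply/allS_mem => i _; apply: oU.
split; first by apply/fell_fl.
by move=> F /fell_fl bF OF; apply: sub.
Qed.

Lemma omega_openI W : W `<=` Om -> (forall A, W A -> exists K Us, compact K /\
  allS open Us /\ fl K Us A /\ (forall F, fl K Us F -> Om F -> W F)) -> Oop W.
Proof.
move=> WO h; split => // A /h [K [Us [cK [oU [fA sub]]]]].
exists K, (size Us), (fun i => nth set0 Us i); split => //; split.
  by move=> i; move/(allS_nthP set0): oU; apply.
split; first by rewrite -fl_basic.
by move=> F [bF OF]; apply: sub => //; rewrite fl_basic.
Qed.

Lemma fl_app K1 K2 Us1 Us2 F :
  fl (K1 `|` K2) (Us1 ++ Us2) F <-> fl K1 Us1 F /\ fl K2 Us2 F.
Proof.
rewrite /fl /= allS_cat setIUr setU_eq0; tauto.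
Qed.

Definition ok (Dom : set (set L)) (A : set L) (G : set L -> Prop) :=
  exists K Us, compact K /\ allS open Us /\ fl K Us A /\
    (forall F, fl K Us F -> Om F -> Dom F -> G F).

Lemma ok_T Dom A : ok Dom A (fun _ => True).
Proof.
exists set0, [::]; split; first exact: compact0.
by split => //; split => //; split => //; rewrite setI0.
Qed.

Lemma ok_mono Dom A (G1 G2 : set L -> Prop) : ok Dom A G1 -> (forall F, G1 F -> G2 F) ->
  ok Dom A G2.
Proof.
move=> [K [Us [cK [oU [fA h]]]]] sub; exists K, Us; do 3 split => //.
by move=> F f1 f2 f3; apply: sub; apply: h.
Qed.

Lemma ok_I Dom A (G1 G2 : set L -> Prop) : ok Dom A G1 -> ok Dom A G2 ->
  ok Dom A (fun F => G1 F /\ G2 F).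
Proof.
move=> [K1 [Us1 [c1 [oo1 [f1 h1]]]]] [K2 [Us2 [c2 [oo2 [f2 h2]]]]].
exists (K1 `|` K2), (Us1 ++ Us2); split; first exact: compactU.
split; first by apply/allS_cat.
split; first by apply/fl_app.
by move=> F /fl_app [g1 g2] OF DF; split; [apply: h1|apply: h2].
Qed.

Lemma ok_fl Dom A (f : set L -> set L) K0 Us0 :
  ok Dom A (fun F => f F `&` K0 = set0) ->
  allS (fun U => ok Dom A (fun F => f F `&` U !=set0)) Us0 ->
  ok Dom A (fun F => fl K0 Us0 (f F)).
Proof.
move=> hK hU.
suff hA : ok Dom A (fun F => allS (fun U => f F `&` U !=set0) Us0).
  by apply: ok_mono (ok_I hK hA) _ => F [].
elim: Us0 hU => [|U Us IH] /= hU; first exact: ok_T.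
case: hU => h1 h2; exact: ok_I h1 (IH h2).
Qed.

Lemma rel_cont_omega (Dom : set (set L)) (f : set L -> set L) :
  Dom `<=` Om -> (forall A, Dom A -> Om (f A)) ->
  (forall A K0 Us0, Dom A -> compact K0 -> allS open Us0 -> fl K0 Us0 (f A) ->
     ok Dom A (fun F => fl K0 Us0 (f F))) ->
  rel_cont Oop Oop Dom f.
Proof.
move=> DO fO core O oO.
pose O' := [set F | Om F /\ exists K Us, compact K /\ allS open Us /\ fl K Us F /\
  (forall F', fl K Us F' -> Om F' -> Dom F' -> O (f F'))].
exists O'; split.
  apply: omega_openI => [F []//|F [OF [K [Us [cK [oU [fF h]]]]]]].
  exists K, Us; do 3 split => //.
  by move=> F' f1 f2; split => //; exists K, Us.
apply/seteqP; split => A [DA h]; split => //.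
  have [K0 [Us0 [cK0 [oU0 [fA sub]]]]] := omega_openE oO h.
  have [K [Us [cK [oU [fA' hh]]]]] := core _ _ _ DA cK0 oU0 fA.
  split; first exact: DO.
  exists K, Us; do 3 split => //.
  by move=> F' f1 f2 f3; apply: sub; [apply: hh|apply: fO].
case: h => OA [K [Us [cK [oU [fA hh]]]]]; exact: hh.
Qed.

Lemma Oop_meet (X : set L) : open X -> Oop [set F | Om F /\ F `&` X !=set0].
Proof.
move=> oX; apply: omega_openI => [F []//|F [OF ne]].
exists set0, [:: X]; split; first exact: compact0.
split => //; split; first by split => //; rewrite setI0.
by move=> F' [_ [h _]] OF'.
Qed.


Lemma s_open (X : set L) : open X -> open (s @` X).
Proof.
move=> oX; apply: openP' => _ [x Xx <-].
have [_ lh] := lh_s.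
have [W [Wx [_ [_ [[Wo [oWo EW]] [_ [g [gB [gK [_ gc]]]]]]]]]] := lh x I.
have [Z [oZ EZ]] := gc X oX.
exists ((s @` W) `&` Z); split.
  by rewrite EW setTI; apply: openI.
split.
  have : (s @` W `&` g @^-1` X) (s x) by split; [exists x|rewrite /preimage /= gK].
  by rewrite EZ.
move=> y; rewrite -EZ => -[yW gy]; exists (g y) => //.
by have [_ ->] := gB y yW.
Qed.

Lemma local_sec (mu : L) : exists W0 : set L, open W0 /\ W0 mu /\
  (forall x y, W0 x -> W0 y -> s x = s y -> x = y).
Proof.
have [_ lh] := lh_s.
have [W [Wx [_ [[Wo [oWo EW]] [_ [_ [g [gB [gK _]]]]]]]]] := lh mu I.
exists W; split; first by rewrite EW setTI.
split => // x y Wx' Wy e.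
by rewrite -(gK x Wx') e gK.
Qed.

Lemma UU_char n : P n -> UU n = [set F | Om F /\ F `&` Lam n !=set0].
Proof.
move=> Pn; apply/seteqP; split => F.
  move=> [OF [_ ne]]; split => //.
  have [_ [_ [hF _]]] := OF.
  by have [mu [Fmu dmu]] := (shift_iff _ hF).1 ne; exists mu.
move=> [OF [mu [Fmu dmu]]]; split => //; split => //.
have [_ [_ [hF _]]] := OF.
by apply/(shift_iff _ hF); exists mu.
Qed.

Definition up (mu : L) (F : set L) : set L :=
  [set la | exists b, F b /\ s mu = r b /\ ple' la (comp mu b)].

Lemma up_Om F mu : Om F -> (exists b, F b /\ r b = s mu) ->
  Om (up mu F) /\ up mu F mu /\ sh (up mu F) (d mu) = F.
Proof.
move=> OF [b0 [Fb0 rb0]]; have [_ [_ [hF dF]]] := OF.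
have hU : hered (up mu F).
  by move=> la la' [b [Fb [h le]]] le'; exists b; do 2 split => //; apply: le_trans le' le.
have Umu : up mu F mu by exists b0; do 2 split => //; apply: mu_le.
have dU : dirs (up mu F).
  move=> la la' [b [Fb [hb l1]]] [b' [Fb' [hb' l2]]].
  have [c [Fc [j1 j2]]] := dF _ _ Fb Fb'.
  have hc : s mu = r c by rewrite hb (vertex_eq hF dF Fb Fc).
  exists (comp mu c); split; first by exists c; do 2 split => //; apply: le_refl.
  split; [apply: le_trans l1 (le_comp_mono j1 hb) | apply: le_trans l2 (le_comp_mono j2 hb')].
have OU : Om (up mu F).
  split; first by exists mu.
  by split; [exact: Om_closed|split].
split => //; split => //.
apply/seteqP; split => nu.
  move/(shift_char hU dU Umu erefl) => [h1 [b [Fb [hb le]]]].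
  by apply: hF Fb _; apply: le_comp_cancel le h1 hb.
move=> Fnu; apply/(shift_char hU dU Umu erefl).
have h : s mu = r nu by rewrite -rb0 (vertex_eq hF dF Fb0 Fnu).
by split => //; exists nu; do 2 split => //; apply: le_refl.
Qed.

Lemma up_shift A mu : Om A -> A mu -> up mu (sh A (d mu)) = A.
Proof.
move=> OA Amu; have [_ [_ [hA dA]]] := OA.
have ch := shift_char hA dA Amu erefl.
apply/seteqP; split => la.
  move=> [b [/ch [_ Ab] [hb le]]]; exact: hA Ab le.
move=> Ala; have [nu [Anu [l1 [c [hc Enu]]]]] := dA _ _ Ala Amu.
exists c; split; first by apply/ch; rewrite -Enu.
by rewrite -Enu.
Qed.

Lemma VV_char n : P n -> VV n = [set F | Om F /\ F `&` (r @^-1` (s @` Lam n)) !=set0].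
Proof.
move=> Pn; apply/seteqP; split => F.
  move=> [A [OA [_ ne]] <-]; split; first exact: shift_Om.
  have [_ [_ [hA dA]]] := OA.
  have [mu [Amu dmu]] := (shift_iff _ hA).1 ne.
  exists (iota (s mu)); split.
    by apply/(shift_char hA dA Amu dmu); rewrite r_iota iota_r.
  by rewrite /preimage /= r_iota; exists mu.
move=> [OF [b [Fb [mu dmu E]]]].
have [OU [Umu SU]] := up_Om OF (ex_intro _ b (conj Fb (esym E))).
rewrite dmu in SU.
exists (up mu F) => //; split => //; split => //.
by rewrite SU; exists b.
Qed.

Lemma T_U Dom n A U : Om A -> open U -> sh A n `&` U !=set0 ->
  ok Dom A (fun F => sh F n `&` U !=set0).
Proof.
move=> OA oU [b [[mu [dmu [hmu Ab]]] Ub]].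
pose E := uncomp comp @` (cmpb `&` (Lam n `*` U)).
have oE : open E.
  apply: open_comp; exists (Lam n `*` U); split => //.
  by apply: open_setX => //; exact: Lam_open.
exists set0, [:: E]; split; first exact: compact0.
split; first by split.
split.
  split; first by rewrite setI0.
  by split => //; exists (comp mu b); split => //; exists (mu, b).
move=> F [_ [[x [Fx [[a c] [hac [da Uc]] ex]]] _]] _ _.
exists c; split => //; exists a; do 2 split => //.
by rewrite -ex in Fx.
Qed.

Lemma T_K Dom n A K0 mu : Om A -> A mu -> d mu = n -> compact K0 ->
  sh A n `&` K0 = set0 -> ok Dom A (fun F => sh F n `&` K0 = set0).
Proof.
move=> OA Amu dmu cK0 hK; have [_ [_ [hA dA]]] := OA.
have [C [cC nC]] := cpt_nbhd mu.
have cCn : compact (C `&` Lam n) by apply: compact_closedI; [exact: cC|exact: Lam_closed].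
pose Kp := uncomp comp @` (((C `&` Lam n) `*` K0) `&` cmpb).
have cKp : compact Kp.
  apply: rel_cont_compact rc_comp _ _; first exact: subIsetr.
  by apply: compact_closedI (compact_setX cCn cK0) cmpb_closed.
exists Kp, [:: C° `&` Lam n]; split => //.
split; first by split => //; apply: openI; [exact: open_interior|exact: Lam_open].
split.
  split.
    apply/seteqP; split => // x [Ax [[c k] [[[Cc dc] Kk] hck] ex]].
    rewrite -ex /= in Ax.
    have Ac : A c by apply: hA Ax (mu_le hck).
    have E : c = mu by apply: uniq_deg hA dA Ac Amu _; rewrite dc dmu.
    have : (sh A n `&` K0) k by split => //; exists c; do 2 split => //.
    by rewrite hK.
  by split => //; exists mu; split => //; split.
move=> F [h1 [[x [Fx [Cx dx]]] _]] OF _.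
have [_ [_ [hF dF]]] := OF.
apply/seteqP; split => // k [[a [da [ha Fak]]] Kk].
have Fa : F a by apply: hF Fak (mu_le ha).
have E : a = x by apply: uniq_deg hF dF Fa Fx _; rewrite da dx.
have : (F `&` Kp) (comp a k).
  split => //; exists (a, k) => //; split => //; split => //; split => //.
  by rewrite E; apply: interior_subset.
by rewrite h1.
Qed.


Lemma R_compact (K1 : set V) p : compact K1 -> P p -> compact [set c | K1 (r c) /\ d c = p].
Proof.
move=> cK1 Pp.
have := Hrd (K := K1 `*` [set p : discrete_topology Q]).
move=> /(_ _ (compact_setX cK1 (@compact_set1 _ (p : discrete_topology Q)))).
by apply => // -[x y] /= [_ ->].
Qed.

Lemma fin_cover (K0 : set L) : compact K0 ->
  exists ys : seq L, forall x, K0 x -> exists y, y \in ys /\ d x = d y.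
Proof.
move=> cK0.
have cov : K0 `<=` cover K0 (fun y => Lam (d y)) by move=> x Kx; exists x.
have [D' _ covD'] := cpt_cover cK0 (fun y _ => Lam_open (d y)) cov.
exists (enum_fset D') => x /covD' [y D'y dx]; exists y; split => //.
Qed.

Lemma compact_seq_union (ys : seq L) (G : L -> set L) : (forall y, compact (G y)) ->
  compact [set c | exists y, y \in ys /\ G y c].
Proof.
move=> cG; elim: ys => [|a ys IH].
  have -> : [set c | exists y, y \in [::] /\ G y c] = set0.
    by apply/seteqP; split => // c [y []].
  exact: compact0.
have -> : [set c | exists y, y \in a :: ys /\ G y c] =
    G a `|` [set c | exists y, y \in ys /\ G y c].
  apply/seteqP; split => c.
    by move=> [y []]; rewrite in_cons => /orP [/eqP -> h|h1 h2]; [left|right; exists y].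
  move=> [h|[y [h1 h2]]]; first by exists a; rewrite in_cons eqxx.
  by exists y; rewrite in_cons h1 orbT.
exact: compactU.
Qed.

Definition islub (q n p : Q) := P p /\ ple P q p /\ ple P n p /\
  forall k, P k -> ple P q k -> ple P n k -> ple P p k.

Lemma lub_uniq q n p p' : islub q n p -> islub q n p' -> p = p'.
Proof.
move=> [Pp [qp [np lp]]] [Pp' [qp' [np' lp']]].
have [x [Px E1]] := lp p' Pp' qp' np'.
have [y [Py E2]] := lp' p Pp qp np.
have xy : x * y = 1.
  by apply: (@mulgI _ p); rewrite mulg1 mulgA -E1 -E2.
have Pxi : P x^-1 by rewrite (mulg1_eq xy).
by rewrite E1 (P_antisym Px Pxi) mulg1.
Qed.

Definition Dq (C K0 : set L) (n q : Q) : set L :=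
  [set c | exists mu' la, C mu' /\ s mu' = r c /\ K0 la /\ d la = q /\
     ple' la (comp mu' c) /\ islub q n (d (comp mu' c))].

Lemma Dq_compact C K0 n q : P n -> P q -> compact C -> (forall x, C x -> d x = n) ->
  compact K0 -> compact (Dq C K0 n q).
Proof.
move=> Pn Pq cC Cn cK0.
case: (pselect (exists p, islub q n p)) => [[p0 lub0]|nolub]; last first.
  have -> : Dq C K0 n q = set0.
    apply/seteqP; split => // c [mu' [la [_ [_ [_ [_ [_ h]]]]]]].
    by apply: nolub; exists (d (comp mu' c)).
  exact: compact0.
have [_ [[p2 [Pp2 E2]] [[p1 [Pp1 E1]] _]]] := lub0.
pose R := [set c | (s @` C) (r c) /\ d c = p1].
have cR : compact R.
  apply: R_compact => //.
  by apply: (rel_cont_compact (A := setT)) => //; apply: rel_cont_cont cont_s.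
pose Z := [set x | Lam p0 x /\ exists la, K0 la /\ d la = q /\ ple' la x].
have clZ : closed Z.
  have [_ [g [gB [gK [_ gc]]]]] := homeoG Pq Pp2.
  have clK0 : closed (K0 `*` [set: L]).
    have -> : K0 `*` [set: L] = setT `&` fst @^-1` K0.
      by apply/seteqP; split => -[x y] /= [h1 h2].
    apply: rel_cont_closed; [exact: rel_cont_fst|exact: closedT|].
    exact: compact_closed hausL cK0.
  have -> : Z = Lam (q * p2) `&` g @^-1` (K0 `*` [set: L]).
    apply/seteqP; split => x [h1 h2].
      rewrite E2 in h1; split => //.
      have [[h3 [h4 h5]] h6] := gB x h1.
      case: h2 => la [K0la [dla le]].
      have ax : ple' (g x).1 x by exists (g x).2; split => //; rewrite -[in LHS]h6.
      have E := prefix_uniq le ax (etrans dla (esym h4)).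
      by split => //; rewrite -E.
    split; first by rewrite E2.
    have [[h3 [h4 h5]] h6] := gB x h1.
    exists (g x).1; split; first by case: h2.
    split => //; exists (g x).2; split => //.
  by apply: (rel_cont_closed gc); [exact: Lam_closed | exact: clK0].
pose S := (C `*` R) `&` (cmpb `&` uncomp comp @^-1` Z).
have cS : compact S.
  apply: compact_closedI; first exact: compact_setX.
  exact: rel_cont_closed rc_comp cmpb_closed clZ.
have -> : Dq C K0 n q = snd @` S.
  apply/seteqP; split => c.
    move=> [mu' [la [Cmu' [hc [K0la [dla [le lub]]]]]]].
    have E := lub_uniq lub lub0.
    have dc : d c = p1.
      by apply: (@mulgI _ n); rewrite -E1 -E d_comp // (Cn _ Cmu').
    have Rc : R c by split => //; exists mu'.
    exists (mu', c) => //; split; first by split.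
    split => //; split; first by rewrite /deg_set /= E.
    by exists la.
  move=> [[mu' c'] [[Cmu' _] [hc [Zx [la [K0la [dla le]]]]]] <-] /=.
  exists mu', la; do 5 split => //.
  by rewrite Zx.
by apply: (rel_cont_compact (A := setT)) => //; exact: rel_cont_snd.
Qed.


Lemma allS_and {T : Type} (P1 P2 P3 : T -> Prop) l :
  allS P1 l -> allS P2 l -> (forall x, P1 x -> P2 x -> P3 x) -> allS P3 l.
Proof. by elim: l => [|a l IH] //= [h1 h2] [h3 h4] h; split; [apply: h|apply: IH]. Qed.

Section GMap.
Variables (n : Q) (W1 : set L).
Hypothesis Pn : P n.
Hypothesis oW1 : open W1.
Hypothesis W1n : forall x, W1 x -> d x = n.
Hypothesis injW1 : forall x y, W1 x -> W1 y -> s x = s y -> x = y.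

Definition gmap (F : set L) : set L :=
  [set la | exists mu b, W1 mu /\ F b /\ s mu = r b /\ ple' la (comp mu b)].
Definition Wt : set (set L) := [set F | Om F /\ F `&` (r @^-1` (s @` W1)) !=set0].
Definition WW : set (set L) := [set F | Om F /\ F `&` W1 !=set0].

Lemma gmap_up F mu b0 : Om F -> W1 mu -> F b0 -> r b0 = s mu -> gmap F = up mu F.
Proof.
move=> OF W1mu Fb0 rb0; have [_ [_ [hF dF]]] := OF.
apply/seteqP; split => la.
  move=> [mu' [b [W1mu' [Fb [h le]]]]].
  have E : mu' = mu.
    by apply: injW1 => //; rewrite h (vertex_eq hF dF Fb Fb0) rb0.
  by exists b; rewrite -E.
by move=> [b [Fb [h le]]]; exists mu, b.
Qed.

Lemma Wt_gmap F : Wt F -> WW (gmap F) /\ sh (gmap F) n = F.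
Proof.
move=> [OF [b [Fb [mu W1mu E]]]].
rewrite (gmap_up OF W1mu Fb (esym E)).
have [OU [Umu SU]] := up_Om OF (ex_intro _ b (conj Fb (esym E))).
rewrite (W1n W1mu) in SU.
by split => //; split => //; exists mu.
Qed.

Lemma WW_gmap A : WW A -> gmap (sh A n) = A /\ Wt (sh A n).
Proof.
move=> [OA [mu [Amu W1mu]]]; have [_ [_ [hA dA]]] := OA.
have dmu := W1n W1mu.
have S0 : sh A n (iota (s mu)).
  by apply/(shift_char hA dA Amu dmu); rewrite r_iota iota_r.
have OS : Om (sh A n) by apply: shift_Om => //; exists (iota (s mu)).
split.
  rewrite (gmap_up OS W1mu S0 (r_iota _)) -dmu.
  exact: up_shift.
split => //; exists (iota (s mu)); split => //.
by rewrite /preimage /= r_iota; exists mu.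
Qed.

Lemma image_WW : (fun A => sh A n) @` WW = Wt.
Proof.
apply/seteqP; split => F.
  by move=> [A WA <-]; case: (WW_gmap WA).
move=> WF; have [h1 h2] := Wt_gmap WF.
by exists (gmap F).
Qed.

Lemma WW_UU : WW `<=` UU n.
Proof.
by rewrite UU_char // => F [OF [x [Fx W1x]]]; split => //; exists x; split => //; apply: W1n.
Qed.

Lemma Wt_VV : Wt `<=` VV n.
Proof.
rewrite VV_char // => F [OF [b [Fb [mu W1mu E]]]]; split => //.
by exists b; split => //; exists mu => //; apply: W1n.
Qed.

Lemma g_U Dom F U : Wt F -> open U -> gmap F `&` U !=set0 ->
  ok Dom F (fun F' => gmap F' `&` U !=set0).
Proof.
move=> WF oU [la [[mu [b [W1mu [Fb [hb [al [hal Eal]]]]]]] Ula]].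
pose E := uncomp comp @` (cmpb `&` (U `*` setT)).
have oE : open E.
  apply: open_comp; exists (U `*` setT); split => //.
  by apply: open_setX => //; exact: openT.
have [Oo [oOo EO]] := rc_comp oE.
have Omb : Oo (mu, b).
  have : (cmpb `&` uncomp comp @^-1` E) (mu, b).
    by split => //; exists (la, al) => //; split.
  by rewrite EO => -[].
have nO : nbhs (mu, b) Oo by apply: open_nbhs_nbhs.
case: nO => -[X Y] [/= nX nY] sXY.
pose X' := X° `&` W1.
pose Y' := Y° `&` r @^-1` (s @` X').
have oY' : open Y'.
  apply: openI; first exact: open_interior.
  apply: (continuousP _).1; first exact: cont_r.
  by apply: s_open; apply: openI => //; exact: open_interior.
exists set0, [:: Y']; split; first exact: compact0.
split; first by split.
split.
  split; first by rewrite setI0.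
  by split => //; exists b; split => //; split => //; exists mu.
move=> F' [_ [[b' [F'b' [Yb' [mu' [Xmu' W1mu'] Emu']]]] _]] _ _.
have Omb' : Oo (mu', b') by apply: sXY; split; apply: interior_subset.
have : (cmpb `&` uncomp comp @^-1` E) (mu', b') by rewrite EO.
move=> [_ [[la' al'] [hla' [Ula' _]] ex]].
exists la'; split => //.
exists mu', b'; do 3 split => //.
by exists al'; split => //; rewrite ex.
Qed.

Lemma g_K Dom F K0 : Wt F -> compact K0 -> gmap F `&` K0 = set0 ->
  ok Dom F (fun F' => gmap F' `&` K0 = set0).
Proof.
move=> [OF [b0 [Fb0 [mu W1mu E0]]]] cK0 hK.
have [_ [_ [hF dF]]] := OF.
have [C [cC [CW1 nC]]] := cpt_nbhd_in oW1 W1mu.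
have [ys covK] := fin_cover cK0.
pose Kall := [set c | exists y, y \in ys /\ Dq C K0 n (d y) c].
have cKall : compact Kall.
  apply: compact_seq_union => y; apply: Dq_compact => //; first exact: Pd.
  by move=> x /CW1; apply: W1n.
exists Kall, [:: r @^-1` (s @` C°)]; split => //.
split.
  split => //; apply: (continuousP _).1; first exact: cont_r.
  by apply: s_open; exact: open_interior.
split.
  split.
    apply/seteqP; split => // c [Fc [y [_ [mu' [la [Cmu' [hc [K0la [_ [le _]]]]]]]]]].
    have E : mu' = mu.
      by apply: injW1 => //; [exact: CW1|rewrite hc (vertex_eq hF dF Fc Fb0) E0].
    have : (gmap F `&` K0) la by split => //; exists mu', c; split; [exact: CW1|do 2 split => //].
    by rewrite hK.
  by split => //; exists b0; split => //; exists mu.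
move=> F' [h1 [[b' [F'b' [mu' Cmu' E']]] _]] OF' _.
have [_ [_ [hF' dF']]] := OF'.
apply/seteqP; split => // la [[mu2 [b2 [W1mu2 [Fb2 [h2 le2]]]]] K0la].
have Cmu'' : C mu' by apply: interior_subset.
have E2 : mu2 = mu'.
  by apply: injW1 => //; [exact: CW1|rewrite h2 (vertex_eq hF' dF' Fb2 F'b') E'].
subst mu2.
have [y [ys_y dy]] := covK _ K0la.
have dmu' : d mu' = n by apply: W1n; apply: CW1.
have ub1 := le_deg le2.
have ub2 : ple P n (d (comp mu' b2)) by rewrite d_comp // dmu'; exists (d b2); split => //; exact: Pd.
have [p [Pp [lp1 [lp2 lp3]]]] := P_lub (Pd la) Pn (ex_intro _ _ (conj (Pd _) (conj ub1 ub2))).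
have [ga [lga dga]] := prefix_ex Pp (lp3 _ (Pd _) ub1 ub2).
have mug : ple' mu' ga by apply: prefix_le (mu_le h2) lga _; rewrite dmu' dga.
case: mug => c [hc Ega].
have cb2 : ple' c b2 by apply: (@le_comp_cancel mu') => //; rewrite -Ega.
have F'c : F' c by apply: hF' Fb2 cb2.
have lag : ple' la ga by apply: prefix_le le2 lga _; rewrite dga.
have : (F' `&` Kall) c.
  split => //; exists y; split => //.
  exists mu', la; do 4 split => //; rewrite -?dy -?Ega //.
  by split => //; rewrite dga.
by rewrite h1.
Qed.

End GMap.

Lemma T_rel_cont n : P n -> rel_cont Oop Oop (UU n) (fun A => sh A n).
Proof.
move=> Pn; apply: rel_cont_omega.
- by move=> A [].
- by move=> A [OA [_ ne]]; apply: shift_Om.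
move=> A K0 Us0 DA cK0 oU [fK fU].
have OA : Om A by case: DA.
have [_ [_ [hA dA]]] := OA.
have [mu [Amu dmu]] : exists mu, A mu /\ d mu = n.
  by case: DA => _ [_ ne]; apply/(shift_iff _ hA).
apply: ok_fl; first exact: T_K OA Amu dmu cK0 fK.
apply: (allS_and oU fU) => U oU' ne.
exact: T_U OA oU' ne.
Qed.

Lemma partial_local_homeos : by_partial_local_homeos P r s comp d.
Proof.
move=> n Pn.
split; first by rewrite UU_char //; apply: Oop_meet; exact: Lam_open.
split.
  rewrite VV_char //; apply: Oop_meet; apply: (continuousP _).1; first exact: cont_r.
  by apply: s_open; exact: Lam_open.
split; first by move=> A UA; exists A.
move=> A UA.
have [mu [Amu dmu]] : exists mu, A mu /\ d mu = n.
  move: UA; rewrite UU_char // => -[_ [mu [Amu dmu]]]; by exists mu.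
have [W0 [oW0 [W0mu inj]]] := local_sec mu.
pose W1 := W0 `&` Lam n.
have oW1 : open W1 by apply: openI => //; exact: Lam_open.
have W1n : forall x, W1 x -> d x = n by move=> x [].
have inj1 : forall x y, W1 x -> W1 y -> s x = s y -> x = y.
  by move=> x y [] + _ [] + _; apply: inj.
exists (WW W1); split.
  by split; [case: UA|exists mu].
split; first exact: WW_UU.
split.
  exists (WW W1); split; first exact: Oop_meet.
  apply/seteqP; split => F; first by move=> WF; split => //; move: WF; apply: WW_UU.
  by case.
split.
  rewrite image_WW //; exists (Wt W1); split.
    apply: Oop_meet; apply: (continuousP _).1; first exact: cont_r.
    exact: s_open.
  apply/seteqP; split => F; first by move=> WF; split => //; move: WF; apply: Wt_VV.
  by case.
rewrite image_WW //.
split; first by move=> B WB; case: (WW_gmap W1n inj1 WB).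
exists (gmap W1); split.
  by move=> F WF; apply: Wt_gmap.
split; first by move=> B WB; case: (WW_gmap W1n inj1 WB).
split.
  apply: rel_cont_sub (T_rel_cont Pn) _; exact: WW_UU.
apply: rel_cont_omega.
- by move=> F [].
- by move=> F WF; case: (Wt_gmap W1n inj1 WF) => -[].
move=> F K0 Us0 DF cK0 oU [fK fU].
apply: ok_fl; first exact: (g_K Pn oW1 W1n inj1 _ DF cK0 fK).
apply: (allS_and oU fU) => U oU' ne.
exact: (g_U oW1 _ DF oU' ne).
Qed.

End Main.

Unset Implicit Arguments.

Theorem theorem6p10 (Q : groupType) (P : set Q) (L V : topologicalType)
  (iota : V -> L) (r s : L -> V) (comp : L -> L -> L) (d : L -> Q) :
  quasi_lattice_ordered P ->
  is_topological_P_graph P iota r s comp d ->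
  rd_proper P r d ->
  is_partial_action P r s comp d /\
  by_partial_local_homeos P r s comp d /\
  directed_action P r s comp d.
Proof.
move=> HQ HG Hrd; split; first exact: (partial_action HQ HG).
split; first exact: (partial_local_homeos HQ HG Hrd).
exact: (directed_act HQ HG).
Qed.
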